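(* Let $m$ be the normalized Lebesgue measure on $[-\pi,\pi]^N$ and for $(\theta_i^0)\in[-\pi,\pi]^N$ let $R_0=\frac1N\sum_{j=1}^N(1+\cos\theta_j^0)$. For every $t\in(0,1)$, \[ m\{(\theta_i^0)\in[-\pi,\pi]^N: R_0\le t\}\le\min\left\{\exp\big(-(1-t)^2N\big),\ \Big(\frac{\sqrt{\pi et}}{2}\Big)^N\right\}. \] *)

(* Defs.v *)
From HB Require Import structures.
From mathcomp Require Import all_boot all_order all_algebra.
From mathcomp Require Import all_classical all_reals all_analysis.
Set Implicit Arguments. Unset Strict Implicit. Unset Printing Implicit Defensive.
Import Order.TTheory GRing.Theory Num.Theory.
Import numFieldNormedType.Exports.
Local Open Scope classical_set_scope.
Local Open Scope ring_scope.
Local Open Scope ereal_scope.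

Fixpoint iter_cube_int (R : realType) (n : nat) : (n.-tuple R -> \bar R) -> \bar R :=
  match n return (n.-tuple R -> \bar R) -> \bar R with
  | 0 => fun f => f [tuple]
  | n'.+1 => fun f =>
      \int[@lebesgue_measure R]_(x in `[(- pi)%R, pi]%classic)
        @iter_cube_int R n' (fun t : n'.-tuple R => f (cons_tuple (x : R) t))
  end.

(* Normalized Lebesgue measure m on [-pi,pi]^N (the N-fold product of the
   uniform probability on [-pi,pi]), evaluated on a set A of N-tuples:
   m(A) = (2 pi)^{-N} * Leb_N(A /\ [-pi,pi]^N), computed by Tonelli as an
   iterated integral of the indicator of A. *)
Definition cube_measure (R : realType) (N : nat) (A : set (N.-tuple R)) : \bar R :=
  (((2 * pi) ^- N)%R)%:E * @iter_cube_int R N (fun t => (\1_A t)%:E).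

Definition order_R0 (R : realType) (N : nat) (th : N.-tuple R) : R :=
  (N%:R)^-1 * \sum_(j < N) (1 + cos (tnth th j)).

(* Main.v *)
Require Import Defs.
From HB Require Import structures.
From mathcomp Require Import all_boot all_order all_algebra.
From mathcomp Require Import all_classical all_reals all_analysis.
From mathcomp Require Import ring lra measurable_realfun.
Import Order.TTheory GRing.Theory Num.Theory.
Import numFieldNormedType.Exports.
Local Open Scope classical_set_scope.
Local Open Scope ring_scope.

Section helpers.
Context {R : realType}.
Implicit Types (f g : R -> R) (x : R).

Lemma dcst x (k : R) : is_derive x 1 (fun _ : R => k) 0.
Proof. exact: is_derive_cst. Qed.
Lemma did x : is_derive x 1 (fun y : R => y) 1.
Proof. exact: is_derive_id. Qed.
Lemma dadd f g x a b : is_derive x 1 f a -> is_derive x 1 g b ->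
  is_derive x 1 (fun y => f y + g y) (a + b).
Proof. move=> ha hb; exact: (is_deriveD ha hb). Qed.
Lemma dsub f g x a b : is_derive x 1 f a -> is_derive x 1 g b ->
  is_derive x 1 (fun y => f y - g y) (a - b).
Proof. move=> ha hb; exact: (is_deriveB ha hb). Qed.
Lemma dmul f g x a b : is_derive x 1 f a -> is_derive x 1 g b ->
  is_derive x 1 (fun y => f y * g y) (f x * b + g x * a).
Proof. move=> ha hb; exact: (is_deriveM ha hb). Qed.
Lemma dcomp f g x a b : is_derive (g x) 1 f a -> is_derive x 1 g b ->
  is_derive x 1 (fun y => f (g y)) (a * b).
Proof. move=> ha hb; exact: (is_derive1_comp ha hb). Qed.
Lemma dexp f x a : is_derive x 1 f a -> is_derive x 1 (fun y => expR (f y)) (expR (f x) * a).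
Proof. move=> ha; exact: (@dcomp expR f x _ _ (is_derive_expR (f x)) ha). Qed.
Lemma dsin f x a : is_derive x 1 f a -> is_derive x 1 (fun y => sin (f y)) (cos (f x) * a).
Proof. move=> ha; exact: (@dcomp sin f x _ _ (is_derive_sin (f x)) ha). Qed.
Lemma dcos f x a : is_derive x 1 f a -> is_derive x 1 (fun y => cos (f y)) (- sin (f x) * a).
Proof. move=> ha; exact: (@dcomp cos f x _ _ (is_derive_cos (f x)) ha). Qed.
Lemma dval f x a b : is_derive x 1 f a -> a = b -> is_derive x 1 f b.
Proof. by move=> h <-. Qed.

Lemma dopp f x a : is_derive x 1 f a -> is_derive x 1 (fun y => - f y) (- a).
Proof. move=> ha; exact: (is_deriveN ha). Qed.
Lemma dpow f x a n : is_derive x 1 f a ->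
  is_derive x 1 (fun y => f y ^+ n) (n%:R * f x ^+ n.-1 * a).
Proof.
move=> ha; elim: n => [|n IH].
  by eapply dval; [apply: dcst| rewrite mul0r mul0r].
have -> : (fun y => f y ^+ n.+1) = (fun y => f y * f y ^+ n).
  by apply/funext => y; rewrite exprS.
eapply dval; first exact: (@dmul f (fun y => f y ^+ n) x _ _ ha IH).
case: n {IH} => [|n]; first by rewrite /= !expr0 !mul0r !mulr0 add0r !mul1r.
rewrite /= [n.+2%:R]mulrS exprS.
have -> : forall (u v w : R), u * (v * w * a) + u * w * a = (1 + v) * (u * w) * a.
  by move=> u v w; ring.
done.
Qed.

Lemma deriv_cont f x a : is_derive x 1 f a -> {for x, continuous f}.
Proof. by move=> [h _]; apply/differentiable_continuous/derivable1_diffP. Qed.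

Lemma ndecr_deriv f (df : R -> R) a b : a <= b ->
  (forall x, a <= x <= b -> is_derive x 1 f (df x)) ->
  (forall x, a <= x <= b -> 0 <= df x) -> f a <= f b.
Proof.
move=> ab hd hp.
have [c cab E] : exists2 c, c \in `[a, b] & f b - f a = df c * (b - a).
  apply: MVT_segment => //.
    by move=> x; rewrite in_itv /= => /andP[ax xb]; apply: hd; rewrite !ltW.
  apply: continuous_in_subspaceT => x; rewrite inE /= in_itv /= => xab.
  exact: deriv_cont (hd x xab).
rewrite -subr_ge0 E mulr_ge0 ?subr_ge0//; apply: hp.
by move: cab; rewrite in_itv.
Qed.

Lemma nincr_deriv f (df : R -> R) a b : a <= b ->
  (forall x, a <= x <= b -> is_derive x 1 f (df x)) ->
  (forall x, a <= x <= b -> df x <= 0) -> f b <= f a.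
Proof.
move=> ab hd hp; rewrite -lerN2.
apply: (@ndecr_deriv (fun y => - f y) (fun y => - df y)) => // x xab.
  exact: is_deriveN (hd x xab).
by rewrite oppr_ge0 hp.
Qed.

End helpers.

Ltac dtac := match goal with
| |- is_derive _ _ (fun _ => ?c) _ => apply: dcst
| |- is_derive _ _ (fun y => y) _ => apply: did
| |- is_derive _ _ (fun y => @?A y + @?B y) _ => eapply (@dadd _ A B); dtac
| |- is_derive _ _ (fun y => @?A y - @?B y) _ => eapply (@dsub _ A B); dtac
| |- is_derive _ _ (fun y => @?A y * @?B y) _ => eapply (@dmul _ A B); dtac
| |- is_derive _ _ (fun y => - @?A y) _ => eapply (@dopp _ A); dtac
| |- is_derive _ _ (fun y => @?A y ^+ _) _ => eapply (@dpow _ A); dtac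
| |- is_derive _ _ (fun y => expR (@?A y)) _ => eapply (@dexp _ A); dtac
| |- is_derive _ _ (fun y => sin (@?A y)) _ => eapply (@dsin _ A); dtac
| |- is_derive _ _ (fun y => cos (@?A y)) _ => eapply (@dcos _ A); dtac
| |- _ => idtac
end.

Ltac fld := field; try (repeat (apply/andP; split)); rewrite ?pnatr_eq0 //.

Section expbounds.
Context {R : realType}.

Lemma expR_le_poly (y : R) : -2 <= y <= 2 ->
  expR y <= 1 + y + y ^+ 2 / 2 + y ^+ 3 / 6 + y ^+ 4 / 12.
Proof.
move=> /andP[y1 y2].
pose F := fun w : R => expR (- w) * (1 + w + w ^+ 2 / 2 + w ^+ 3 / 6 + w ^+ 4 / 12).
pose dF := fun z : R => expR (- z) * (z ^+ 3 * (2 - z) / 12).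
have hkey : forall z : R, is_derive z 1 F (dF z).
  move=> z.
  rewrite /F /dF; eapply dval; first by dtac.
  rewrite /=; fld.
suff : F 0 <= F y.
  have -> : F 0 = 1 by rewrite /F oppr0 expR0; fld.
  rewrite /F expRN => h.
  by rewrite -(ler_pM2l (expR_gt0 y)) mulr1 mulrA mulfV ?gt_eqF ?expR_gt0 ?mul1r in h.
case: (lerP 0 y) => hy.
- apply: (@ndecr_deriv R F dF 0 y) => //; try by move=> u _; apply: hkey.
  move=> u /andP[z0 zy]; rewrite /dF.
  apply: mulr_ge0; first exact: expR_ge0.
  apply: divr_ge0 => //; apply: mulr_ge0; first exact: exprn_ge0.
  by rewrite subr_ge0 (le_trans zy).
- apply: (@nincr_deriv R F dF y 0) => //; first exact: ltW.
    try by move=> u _; apply: hkey.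
  move=> u /andP[yz z0]; rewrite /dF; apply: mulr_ge0_le0; first exact: expR_ge0.
  rewrite pmulr_lle0 ?invr_gt0 //; apply: mulr_le0_ge0.
    by rewrite exprS mulr_le0_ge0 // exprn_even_ge0.
  by rewrite subr_ge0 (le_trans z0).
Qed.

Lemma expR_ge_poly2 (x : R) : 0 <= x -> 1 + x + x ^+ 2 / 2 <= expR x.
Proof.
move=> x0.
pose F := fun w : R => expR (- w) * (1 + w + w ^+ 2 / 2).
pose dF := fun z : R => - (expR (- z) * (z ^+ 2 / 2)).
have hkey : forall z : R, is_derive z 1 F (dF z).
  move=> z.
  rewrite /F /dF; eapply dval; first by dtac.
  rewrite /=; fld.
have : F x <= F 0.
  apply: (@nincr_deriv R F dF 0 x) => //; try by move=> u _; apply: hkey.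
  move=> u _.
  rewrite /dF oppr_le0; apply: mulr_ge0; first exact: expR_ge0.
  by apply: divr_ge0 => //; exact: exprn_even_ge0.
have -> : F 0 = 1 by rewrite /F oppr0 expR0; fld.
rewrite /F expRN => h.
by rewrite -(ler_pM2l (expR_gt0 x)) mulr1 mulrA mulfV ?gt_eqF ?expR_gt0 ?mul1r in h.
Qed.

End expbounds.

Section jordan.
Context {R : realType}.

Lemma dinv (f : R -> R) x a : f x != 0 -> is_derive x 1 f a ->
  is_derive x 1 (fun y => (f y)^-1) (- (f x) ^- 2 * a).
Proof. by move=> h ha; exact: (is_deriveV h ha). Qed.

Lemma xcos_sin (u : R) : 0 <= u <= pi -> u * cos u - sin u <= 0.
Proof.
move=> /andP[u0 upi].
pose G := fun w : R => w * cos w - sin w.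
pose dG := fun w : R => - (w * sin w).
have hk : forall z : R, is_derive z 1 G (dG z).
  move=> z; rewrite /G /dG; eapply dval; first by dtac.
  rewrite /=; fld.
have : G u <= G 0.
  apply: (@nincr_deriv R G dG 0 u) => //; try by move=> z _; apply: hk.
  move=> z /andP[z0 zu]; rewrite /dG oppr_le0 mulr_ge0 // sin_ge0_pi //.
  by rewrite z0 (le_trans zu).
by rewrite /G sin0 mul0r subr0.
Qed.

Lemma jordan (v : R) : 0 <= v <= pi / 2 -> 2 / pi * v <= sin v.
Proof.
move=> /andP[v0 vpi].
have pi0 := @pi_gt0 R.
have [->|vn0] := eqVneq v 0; first by rewrite sin0 mulr0.
have vp : 0 < v by rewrite lt_neqAle eq_sym vn0.
pose Q := fun w : R => sin w * w^-1.
pose dQ := fun w : R => (w * cos w - sin w) / w ^+ 2.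
have hk : forall z : R, 0 < z -> is_derive z 1 Q (dQ z).
  move=> z z0; rewrite /Q /dQ; eapply dval.
    have hi : is_derive z 1 (fun w : R => w^-1) (- z ^- 2 * 1).
      exact: (@dinv (fun w => w) z 1 (negbT (gt_eqF z0)) (did z)).
    exact: (@dmul R sin (fun w => w^-1) z _ _ (is_derive_sin z) hi).
  rewrite /=; field; by rewrite gt_eqF.
have : Q (pi / 2) <= Q v.
  apply: (@nincr_deriv R Q dQ v (pi / 2)) => //; try by move=> z /andP[vz _]; apply: hk; apply: lt_le_trans vz.
  move=> z /andP[vz zpi]; rewrite /dQ; apply: mulr_le0_ge0; last first.
    by rewrite invr_ge0 exprn_even_ge0.
  apply: xcos_sin; rewrite (le_trans v0 vz) /=.
  apply: (le_trans zpi); rewrite ler_pdivrMr //; lra.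
rewrite /Q sin_pihalf invf_div mul1r.
rewrite ler_pdivlMr //.
Qed.

Lemma onepcos (x : R) : 0 <= x <= pi -> 2 * (pi - x) ^+ 2 / pi ^+ 2 <= 1 + cos x.
Proof.
move=> /andP[x0 xpi].
have pi0 := @pi_gt0 R.
set w := pi - x.
have hcx : cos x = - cos w by rewrite /w cosB cospi sinpi; ring.
have hw : cos w = 1 - 2 * sin (w / 2) ^+ 2.
  have -> : cos w = cos ((w / 2) *+ 2).
    by congr cos; rewrite -mulr_natr divfK // pnatr_eq0.
  rewrite cos_mulr2n cos2sin2 -mulr_natr; ring.
have hj : 2 / pi * (w / 2) <= sin (w / 2).
  apply: jordan; apply/andP; split.
    by apply: divr_ge0 => //; rewrite /w subr_ge0.
  by rewrite ler_pM2r ?invr_gt0 // /w lerBlDr lerDl.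
have hj0 : 0 <= 2 / pi * (w / 2).
  by apply: mulr_ge0; [apply: divr_ge0 => //; exact: ltW | apply: divr_ge0 => //; rewrite /w subr_ge0].
rewrite hcx hw.
have hsq : (2 / pi * (w / 2)) ^+ 2 <= sin (w / 2) ^+ 2.
  by rewrite ler_pXn2r // ?nnegrE // (le_trans hj0 hj).
have -> : 2 * w ^+ 2 / pi ^+ 2 = 2 * (2 / pi * (w / 2)) ^+ 2.
  move: (negbT (gt_eqF pi0)); clear; rewrite /w; move: (@pi R) => p hp; by field.
lra.
Qed.

End jordan.


Section intg.
Context {R : realType}.
Notation mu := (@lebesgue_measure R).
Local Open Scope ereal_scope.

Lemma le_integral_nm (D : set R) (f g : R -> \bar R) :
  (forall x, D x -> 0 <= f x) -> (forall x, D x -> f x <= g x) ->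
  \int[mu]_(x in D) f x <= \int[mu]_(x in D) g x.
Proof.
move=> f0 fg.
rewrite (ge0_integralE mu f0) (ge0_integralE mu (fun x Dx => le_trans (f0 x Dx) (fg x Dx))) /=.
apply: le_ereal_sup => _ [h hf <-]; exists h => //= x.
apply: (le_trans (hf x)); rewrite /patch; case: ifP => // /[!inE] Dx.
exact: fg.
Qed.

Lemma int_bound1 (s : R) : (0 <= s <= 1)%R ->
  \int[mu]_(x in `[(- pi)%R, pi]) (expR (- (2 * s) * cos x))%:E
    <= (2 * pi * expR (s ^+ 2))%:E.
Proof.
move=> /andP[s0 s1].
have pi0 := @pi_gt0 R.
pose f := fun x : R => (1 + (- (2 * s) * cos x) + (- (2 * s) * cos x) ^+ 2 / 2
   + (- (2 * s) * cos x) ^+ 3 / 6 + (- (2 * s) * cos x) ^+ 4 / 12)%R.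
pose m := (1 + s ^+ 2 + s ^+ 4 / 2)%R.
pose F := fun x : R => (m * x + sin x * (- (2 * s) + s ^+ 2 * cos x
    + (- (4 / 3) * s ^+ 3) * (2 / 3 + cos x ^+ 2 / 3)
    + (4 / 3 * s ^+ 4) * (3 * cos x / 8 + cos x ^+ 3 / 4)))%R.
have hF : forall x : R, is_derive x 1%R F (f x).
  move=> x; rewrite /F /f /m; eapply dval; first by dtac.
  apply/eqP; rewrite -subr_eq0; apply/eqP.
  rewrite (_ : _ - _ = (- (s ^+ 2 + (- (4 / 3) * s ^+ 3) * (2 * cos x / 3)
     + (4 / 3 * s ^+ 4) * (3 / 8 + 3 * cos x ^+ 2 / 4))) *
     (cos x ^+ 2 + sin x ^+ 2 - 1))%R; last by rewrite /=; fld.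
  by rewrite cos2Dsin2 subrr mulr0.
have FTC : \int[mu]_(x in `[(- pi)%R, pi]) (f x)%:E = (F pi)%:E - (F (- pi))%:E.
  apply: continuous_FTC2.
  - by rewrite gtrN.
  - apply: continuous_subspaceT => x; eapply deriv_cont; rewrite /f; dtac.
  - split.
    + by move=> x _; case: (hF x).
    + by apply: cvg_at_right_filter; exact: deriv_cont (hF _).
    + by apply: cvg_at_left_filter; exact: deriv_cont (hF _).
  - by move=> x _; rewrite derive1E; case: (hF x).
have Hle : \int[mu]_(x in `[(- pi)%R, pi]) (expR (- (2 * s) * cos x))%:E
    <= \int[mu]_(x in `[(- pi)%R, pi]) (f x)%:E.
  apply: le_integral_nm => x _; first by rewrite lee_fin expR_ge0.
  rewrite lee_fin /f; apply: expR_le_poly.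
  have := cos_geN1 x; have := cos_le1 x => c1 c2.
  apply/andP; split; nra.
apply: (le_trans Hle).
rewrite FTC -EFinB lee_fin /F sinN sinpi oppr0 !mul0r !addr0.
have hm : (m <= expR (s ^+ 2))%R.
  have := @expR_ge_poly2 R (s ^+ 2) (sqr_ge0 s); rewrite /m -exprM; exact.
rewrite (_ : (m * pi - m * - pi = 2 * pi * m)%R); last by ring.
by rewrite ler_wpM2l // mulr_ge0 // ltW.
Qed.


Lemma ediv_le (k c : R) (X : \bar R) : (0 < k)%R -> k%:E * X <= c%:E -> X <= (c / k)%:E.
Proof.
move=> k0; case: X => [r| |] //=.
- by rewrite -EFinM !lee_fin ler_pdivlMr // mulrC.
- by rewrite muleC gt0_mulye // leye_eq.
- by move=> _; rewrite leNye.
Qed.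

Lemma cont_gaussF (k c d : R) : continuous (fun x : R => gauss_fun (k * (c + d * x))).
Proof. by move=> x; rewrite /gauss_fun; eapply deriv_cont; dtac. Qed.

Lemma gauss_tail (c : R) : (0 <= c)%R ->
  \int[mu]_(x in `[0%R, c]) (gauss_fun x)%:E <= (Num.sqrt pi / 2)%:E.
Proof.
move=> c0; rewrite -integral0y_gauss.
apply: ge0_subset_integral => //.
- apply/measurable_EFinP; apply: measurable_funTS; exact: measurable_gauss_fun.
- by move=> x _; rewrite lee_fin gauss_fun_ge0.
- by move=> x /=; rewrite !in_itv /= => /andP[-> _].
Qed.

Lemma gauss_piece1 (k : R) : (0 < k)%R ->
  \int[mu]_(x in `[(- pi)%R, pi]) (gauss_fun (k * (pi - x)))%:E
    <= (Num.sqrt pi / 2 / k)%:E.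
Proof.
move=> k0; have pi0 := @pi_gt0 R.
pose F := fun x : R => (k * (pi - x))%R.
have hFd : forall x : R, is_derive x 1%R F (- k)%R.
  by move=> x; rewrite /F; eapply dval; [dtac | rewrite /=; ring].
have dF : forall x, F^`()%classic x = (- k)%R.
  by move=> x; rewrite derive1E; case: (hFd x).
have E : \int[mu]_(x in `[F pi, F (- pi)%R]) (gauss_fun x)%:E =
    \int[mu]_(x in `[(- pi)%R, pi]) ((((gauss_fun \o F) * - F^`()%classic) x)%R)%:E.
  apply: integration_by_substitution_decreasing.
  - by apply: ltW; rewrite gtrN.
  - by move=> x y _ _ xy; rewrite /F ltr_pM2l // ltrD2l ltrN2.
  - by rewrite (funext dF) => x _; exact: cst_continuous.
  - by rewrite (funext dF); exact: is_cvg_cst.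
  - by rewrite (funext dF); exact: is_cvg_cst.
  - split.
    + by move=> x _; case: (hFd x).
    + by apply: cvg_at_right_filter; exact: deriv_cont (hFd _).
    + by apply: cvg_at_left_filter; exact: deriv_cont (hFd _).
  - apply: continuous_subspaceT; exact: continuous_gauss_fun.
have E2 : \int[mu]_(x in `[(- pi)%R, pi]) ((((gauss_fun \o F) * - F^`()%classic) x)%R)%:E =
    \int[mu]_(x in `[(- pi)%R, pi]) (gauss_fun (k * (pi - x)))%:E * k%:E.
  rewrite -ge0_integralZr //; last 2 first.
    by move=> x _; rewrite lee_fin gauss_fun_ge0.
    exact: ltW.
  - apply: eq_integral => x _; rewrite !fctE dF opprK EFinM //.
  - apply/measurable_EFinP; apply: measurable_funTS.
    apply: continuous_measurable_fun.
    have := @cont_gaussF k pi (-1)%R.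
    by under eq_fun do rewrite mulN1r.
apply: ediv_le => //; rewrite muleC -E2 -E.
rewrite /F subrr mulr0; apply: gauss_tail.
by apply: mulr_ge0; [exact: ltW | lra].
Qed.


Lemma gauss_piece2 (k : R) : (0 < k)%R ->
  \int[mu]_(x in `[(- pi)%R, pi]) (gauss_fun (k * (pi + x)))%:E
    <= (Num.sqrt pi / 2 / k)%:E.
Proof.
move=> k0; have pi0 := @pi_gt0 R.
pose F := fun x : R => (k * (pi + x))%R.
have hFd : forall x : R, is_derive x 1%R F k.
  by move=> x; rewrite /F; eapply dval; [dtac | rewrite /=; ring].
have dF : forall x, F^`()%classic x = k.
  by move=> x; rewrite derive1E; case: (hFd x).
have E : \int[mu]_(x in `[F (- pi)%R, F pi]) (gauss_fun x)%:E =
    \int[mu]_(x in `[(- pi)%R, pi]) ((((gauss_fun \o F) * F^`()%classic) x)%R)%:E.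
  apply: integration_by_substitution_increasing.
  - by apply: ltW; rewrite gtrN.
  - by move=> x y _ _ xy; rewrite /F ltr_pM2l // ltrD2l.
  - by rewrite (funext dF) => x _; exact: cst_continuous.
  - by rewrite (funext dF); exact: is_cvg_cst.
  - by rewrite (funext dF); exact: is_cvg_cst.
  - split.
    + by move=> x _; case: (hFd x).
    + by apply: cvg_at_right_filter; exact: deriv_cont (hFd _).
    + by apply: cvg_at_left_filter; exact: deriv_cont (hFd _).
  - apply: continuous_subspaceT; exact: continuous_gauss_fun.
have E2 : \int[mu]_(x in `[(- pi)%R, pi]) ((((gauss_fun \o F) * F^`()%classic) x)%R)%:E =
    \int[mu]_(x in `[(- pi)%R, pi]) (gauss_fun (k * (pi + x)))%:E * k%:E.
  rewrite -ge0_integralZr //; last 2 first.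
    by move=> x _; rewrite lee_fin gauss_fun_ge0.
    exact: ltW.
  - by apply: eq_integral => x _; rewrite !fctE dF EFinM.
  - apply/measurable_EFinP; apply: measurable_funTS.
    apply: continuous_measurable_fun.
    have := @cont_gaussF k pi 1%R.
    by under eq_fun do rewrite mul1r.
apply: ediv_le => //; rewrite muleC -E2 -E.
rewrite /F addrN mulr0; apply: gauss_tail.
by apply: mulr_ge0; [exact: ltW | lra].
Qed.

Lemma int_bound2 (t : R) : (0 < t)%R ->
  \int[mu]_(x in `[(- pi)%R, pi]) (expR (- ((2 * t)^-1 * (1 + cos x))))%:E
    <= (pi * Num.sqrt pi * Num.sqrt t)%:E.
Proof.
move=> t0; have pi0 := @pi_gt0 R.
have st0 : (0 < Num.sqrt t)%R by rewrite sqrtr_gt0.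
pose k := ((pi * Num.sqrt t)^-1)%R.
have k0 : (0 < k)%R by rewrite invr_gt0 mulr_gt0.
have key : forall u : R, (0 <= u <= pi)%R ->
    (expR (- ((2 * t)^-1 * (1 + cos u))) <= gauss_fun (k * (pi - u)))%R.
  move=> u hu; rewrite /gauss_fun ler_expR lerN2.
  have h := @onepcos R u hu.
  have -> : ((k * (pi - u)) ^+ 2 = (2 * t)^-1 * (2 * (pi - u) ^+ 2 / pi ^+ 2))%R.
    rewrite /k exprMn exprVn exprMn sqr_sqrtr ?ltW //.
    move: (negbT (gt_eqF pi0)) (negbT (gt_eqF t0)); move: (@pi R) => p hp ht.
    by field; rewrite hp ht.
  by rewrite ler_pM2l // invr_gt0 mulr_gt0.
have Hle : \int[mu]_(x in `[(- pi)%R, pi]) (expR (- ((2 * t)^-1 * (1 + cos x))))%:E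
   <= \int[mu]_(x in `[(- pi)%R, pi]) ((gauss_fun (k * (pi - x)))%:E + (gauss_fun (k * (pi + x)))%:E).
  apply: le_integral_nm => x; first by rewrite lee_fin expR_ge0.
  rewrite /= in_itv /= => /andP[x1 x2]; rewrite -EFinD lee_fin.
  have [x0|x0] := lerP 0 x.
    apply: le_trans (key x _) _; first by rewrite x0 x2.
    by rewrite lerDl gauss_fun_ge0.
  have hx : (0 <= - x <= pi)%R by apply/andP; split; lra.
  have := key (- x)%R hx; rewrite cosN opprK => h.
  by apply: (le_trans h); rewrite lerDr gauss_fun_ge0.
apply: (le_trans Hle); rewrite ge0_integralD //; first last.
- apply/measurable_EFinP; apply: measurable_funTS.
  apply: continuous_measurable_fun.
  have := @cont_gaussF k pi 1%R.
  by under eq_fun do rewrite mul1r.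
- by move=> x _; rewrite lee_fin gauss_fun_ge0.
- apply/measurable_EFinP; apply: measurable_funTS.
  apply: continuous_measurable_fun.
  have := @cont_gaussF k pi (-1)%R.
  by under eq_fun do rewrite mulN1r.
- by move=> x _; rewrite lee_fin gauss_fun_ge0.
apply: (le_trans (leeD (gauss_piece1 k k0) (gauss_piece2 k k0))).
rewrite -EFinD lee_fin /k invrK.
rewrite le_eqVlt; apply/orP; left; apply/eqP.
move: (@pi R) => p; by field.
Qed.

End intg.

Section iter.
Context {R : realType}.
Notation mu := (@lebesgue_measure R).
Local Open Scope ereal_scope.

Lemma iter_ge0 n (f : n.-tuple R -> \bar R) : (forall t, 0 <= f t) ->
  0 <= @iter_cube_int R n f.
Proof.
elim: n f => [|n IH] f f0 /=; first exact: f0.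
by apply: integral_ge0 => x _; apply: IH => t; exact: f0.
Qed.

Lemma iter_le n (f g : n.-tuple R -> \bar R) : (forall t, 0 <= f t) ->
  (forall t, f t <= g t) -> @iter_cube_int R n f <= @iter_cube_int R n g.
Proof.
elim: n f g => [|n IH] f g f0 fg /=; first exact: fg.
apply: le_integral_nm => x _; first by apply: iter_ge0 => t; exact: f0.
by apply: IH => t; [exact: f0 | exact: fg].
Qed.

Lemma iter_prod n (g : R -> R) (G c : R) : (forall x, 0 <= g x)%R ->
  continuous g -> (0 <= G)%R ->
  \int[mu]_(x in `[(- pi)%R, pi]) (g x)%:E <= G%:E -> (0 <= c)%R ->
  @iter_cube_int R n (fun t : n.-tuple R => (c * \prod_(j < n) g (tnth t j))%:E)
    <= (c * G ^+ n)%:E.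
Proof.
move=> g0 cg G0 hG.
elim: n c => [|n IH] c c0 /=; first by rewrite big_ord0 expr0.
have step : forall x : R, @iter_cube_int R n (fun t : n.-tuple R =>
     (c * \prod_(j < n.+1) g (tnth (cons_tuple x t) j))%:E)
   <= ((c * G ^+ n) * g x)%:E.
  move=> x.
  have -> : (fun t : n.-tuple R => (c * \prod_(j < n.+1) g (tnth (cons_tuple x t) j))%:E)
     = (fun t : n.-tuple R => ((c * g x) * \prod_(j < n) g (tnth t j))%:E).
    apply/funext => t; rewrite big_ord_recl mulrA.
    congr (EFin _); congr (_ * _)%R.
    by apply: eq_bigr => j _; rewrite tnthS.
  apply: le_trans (IH (c * g x)%R _) _; first by rewrite mulr_ge0.
  by rewrite lee_fin le_eqVlt; apply/orP; left; apply/eqP; ring.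
have f0 : forall x : R, `[(- pi)%R, pi]%classic x -> 0 <= @iter_cube_int R n (fun t : n.-tuple R =>
     (c * \prod_(j < n.+1) g (tnth (cons_tuple x t) j))%:E).
  by move=> x _; apply: iter_ge0 => t; rewrite lee_fin mulr_ge0 // prodr_ge0.
apply: (le_trans (@le_integral_nm _ _ _ (fun x => ((c * G ^+ n) * g x)%:E) f0 (fun x _ => step x))).
under eq_integral do rewrite EFinM.
have mg : measurable_fun `[(- pi)%R, pi]%classic (fun x => (g x)%:E).
  apply/measurable_EFinP; apply: measurable_funTS; exact: continuous_measurable_fun.
have g0' : forall x, `[(- pi)%R, pi]%classic x -> 0 <= (g x)%:E.
  by move=> x _; rewrite lee_fin.
have cG : 0 <= (c * G ^+ n)%:E by rewrite lee_fin mulr_ge0 // exprn_ge0.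
rewrite (@ge0_integralZl _ _ _ mu _ (measurable_itv _) (fun x => (g x)%:E) mg _ g0' cG).
rewrite exprS (mulrC G) mulrA EFinM.
exact: (lee_wpmul2l cG hG).
Qed.

End iter.

Section main.
Context {R : realType}.
Notation mu := (@lebesgue_measure R).

Lemma chernoff_pt (N : nat) (hN : (0 < N)%N) (t lam : R) (lam0 : 0 <= lam)
  (th : N.-tuple R) :
  ((\1_[set th : N.-tuple R | (order_R0 th <= t)%R] th)%:E
   <= (1 * \prod_(j < N) expR (lam * t - lam * (1 + cos (tnth th j))))%:E)%E.
Proof.
rewrite lee_fin mul1r -expR_sum indicE.
case: (boolP (th \in _)) => h; last by rewrite expR_ge0.
rewrite inE /= /order_R0 in h.
rewrite -expR0 ler_expR sumrB sumr_const card_ord -mulr_sumr subr_ge0.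
have N0 : (0 < N%:R :> R) by rewrite ltr0n.
rewrite -mulr_natr -mulrA ler_wpM2l // mulrC -ler_pdivrMl //.
by rewrite expR0.
Qed.


Lemma cube_bound (N : nat) (hN : (0 < N)%N) (t lam G : R) (lam0 : 0 <= lam)
  (G0 : 0 <= G) :
  (\int[mu]_(x in `[(- pi)%R, pi]) (expR (lam * t - lam * (1 + cos x)))%:E <= G%:E)%E ->
  (cube_measure [set th : N.-tuple R | (order_R0 th <= t)%R]
    <= ((G / (2 * pi)) ^+ N)%:E)%E.
Proof.
move=> hG; have pi0 := @pi_gt0 R.
rewrite /cube_measure.
have i0 : forall th : N.-tuple R, ((0:R)%:E <= (\1_[set th : N.-tuple R | (order_R0 th <= t)%R] th)%:E)%E.
  by move=> th0; rewrite lee_fin indicE.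
have H1 := @iter_le R N (fun th => (\1_[set th : N.-tuple R | (order_R0 th <= t)%R] th)%:E)
  (fun th => (1 * \prod_(j < N) expR (lam * t - lam * (1 + cos (tnth th j))))%:E)
  i0 (fun th => @chernoff_pt N hN t lam lam0 th).
have H2 := @iter_prod R N (fun x => expR (lam * t - lam * (1 + cos x))) G 1
  (fun x => expR_ge0 _) _ G0 hG ler01.
have cg : continuous (fun x : R => expR (lam * t - lam * (1 + cos x))).
  by move=> x; eapply deriv_cont; dtac.
have H3 := le_trans H1 (H2 cg).
have c0 : ((0:R)%:E <= ((2 * pi) ^- N)%:E)%E by rewrite lee_fin invr_ge0 exprn_ge0 // mulr_ge0 // ltW.
apply: (le_trans (lee_wpmul2l c0 H3)).
rewrite -EFinM lee_fin mul1r [in X in _ <= X]exprMn [in X in _ <= X]exprVn mulrC.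
by [].
Qed.

End main.

Theorem lemma5p4 (R : realType) (N : nat) (hN : (0 < N)%N) (t : R)
  (ht0 : 0 < t) (ht1 : t < 1) :
  (cube_measure [set th : N.-tuple R | (order_R0 th <= t)%R]
   <= (Num.min (expR (- (1 - t) ^+ 2 * N%:R))
               ((Num.sqrt (pi * expR 1 * t) / 2) ^+ N))%:E)%E.
Proof.
have pi0 := @pi_gt0 R.
have piN0 : (pi : R) != 0 by rewrite gt_eqF.
set s := 1 - t.
have s0 : 0 < s by rewrite /s subr_gt0.
have s1 : s <= 1 by rewrite /s lerBlDr lerDl ltW.
have B1 : (cube_measure [set th : N.-tuple R | (order_R0 th <= t)%R]
    <= (expR (- (1 - t) ^+ 2 * N%:R))%:E)%E.
  have hc : continuous (fun x : R => expR (- (2 * s) * cos x)).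
    by move=> x; eapply deriv_cont; dtac.
  have hI : (\int[@lebesgue_measure R]_(x in `[(- pi)%R, pi])
      (expR ((2 * s) * t - (2 * s) * (1 + cos x)))%:E
      <= (2 * pi * expR (- s ^+ 2))%:E)%E.
    have E : forall x : R, expR ((2 * s) * t - (2 * s) * (1 + cos x))
        = expR (- (2 * s ^+ 2)) * expR (- (2 * s) * cos x).
      by move=> x; rewrite -expRD; congr expR; rewrite /s; ring.
    under eq_integral do rewrite E EFinM.
    have m1 : measurable_fun `[(- pi)%R, pi]%classic (fun x : R => (expR (- (2 * s) * cos x))%:E).
      apply/measurable_EFinP; apply: measurable_funTS; exact: continuous_measurable_fun.
    have e0 : forall x, `[(- pi)%R, pi]%classic x -> ((0:R)%:E <= (expR (- (2 * s) * cos x))%:E)%E.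
      by move=> x _; rewrite lee_fin expR_ge0.
    have c0 : ((0:R)%:E <= (expR (- (2 * s ^+ 2)))%:E)%E by rewrite lee_fin expR_ge0.
    rewrite (@ge0_integralZl _ _ _ (@lebesgue_measure R) _ (measurable_itv _) _ m1 _ e0 c0).
    have hs01 : 0 <= s <= 1 by rewrite s1 ltW.
    apply: le_trans (lee_wpmul2l c0 (@int_bound1 R s hs01)) _.
    rewrite -EFinM lee_fin mulrCA -expRD.
    rewrite (_ : - (2 * s ^+ 2) + s ^+ 2 = - s ^+ 2); last by ring.
    by [].
  have l0 : 0 <= 2 * s by rewrite mulr_ge0 // ltW.
  have g0 : 0 <= 2 * pi * expR (- s ^+ 2) by rewrite mulr_ge0 ?expR_ge0 // mulr_ge0 // ltW.
  apply: le_trans (@cube_bound R N hN t _ _ l0 g0 hI) _.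
  rewrite lee_fin mulrC mulrA mulVf ?mul1r; last by rewrite mulf_neq0.
  by rewrite -expRM_natl /s mulrC mulNr.
have B2 : (cube_measure [set th : N.-tuple R | (order_R0 th <= t)%R]
    <= ((Num.sqrt (pi * expR 1 * t) / 2) ^+ N)%:E)%E.
  pose lam := (2 * t)^-1.
  have hI : (\int[@lebesgue_measure R]_(x in `[(- pi)%R, pi])
      (expR (lam * t - lam * (1 + cos x)))%:E
      <= (expR (2^-1) * (pi * Num.sqrt pi * Num.sqrt t))%:E)%E.
    have E : forall x : R, expR (lam * t - lam * (1 + cos x))
        = expR (2^-1) * expR (- ((2 * t)^-1 * (1 + cos x))).
      move=> x; rewrite -expRD; congr expR; rewrite /lam.
      by field; rewrite gt_eqF.
    under eq_integral do rewrite E EFinM.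
    have m1 : measurable_fun `[(- pi)%R, pi]%classic
        (fun x : R => (expR (- ((2 * t)^-1 * (1 + cos x))))%:E).
      apply/measurable_EFinP; apply: measurable_funTS; apply: continuous_measurable_fun.
      by move=> x; eapply deriv_cont; dtac.
    have e0 : forall x, `[(- pi)%R, pi]%classic x ->
        ((0:R)%:E <= (expR (- ((2 * t)^-1 * (1 + cos x))))%:E)%E.
      by move=> x _; rewrite lee_fin expR_ge0.
    have c0 : ((0:R)%:E <= (expR (2^-1))%:E)%E by rewrite lee_fin expR_ge0.
    rewrite (@ge0_integralZl _ _ _ (@lebesgue_measure R) _ (measurable_itv _) _ m1 _ e0 c0).
    by rewrite EFinM; exact: (lee_wpmul2l c0 (@int_bound2 R t ht0)).
  have l0 : 0 <= lam by rewrite /lam invr_ge0 mulr_ge0 // ltW.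
  have g0 : 0 <= expR (2^-1) * (pi * Num.sqrt pi * Num.sqrt t).
    by rewrite mulr_ge0 ?expR_ge0 // mulr_ge0 ?sqrtr_ge0 // mulr_ge0 ?sqrtr_ge0 // ltW.
  apply: le_trans (@cube_bound R N hN t _ _ l0 g0 hI) _.
  rewrite lee_fin le_eqVlt; apply/orP; left; apply/eqP; congr (_ ^+ N).
  have e1 : Num.sqrt (expR 1) = expR (2^-1) :> R.
    have -> : expR 1 = expR (2^-1) ^+ 2 :> R.
      by rewrite -expRM_natl; congr expR; field.
    by rewrite sqrtr_sqr ger0_norm // expR_ge0.
  rewrite sqrtrM; last by rewrite mulr_ge0 ?expR_ge0 // ltW.
  rewrite sqrtrM; last exact: ltW.
  rewrite e1.
  move: piN0; move: (@pi R) => p hp.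
  by field.
case: (leP (expR (- (1 - t) ^+ 2 * N%:R)) ((Num.sqrt (pi * expR 1 * t) / 2) ^+ N)) => h.
  exact: B1.
exact: B2.
Qed.
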